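(* Let $a,b,f,d$ be positive integers with $f<\min\{a,b\}$. Let $A_1$ be the $a\times(a+b)$ array whose empty cells are exactly those in rows $[a-f+1,a]$ and columns $[1,a]$, and let $B_1$ be the $(b+f)\times(a+b)$ array whose empty cells are exactly those in rows $[b+1,b+f]$ and columns $[a+f+1,a+b]$. Let $A_2=J_{d,a+b}$ be the completely filled $d\times(a+b)$ array. Let $\phi$ be the bishop's move function on $[A_1\mid A_2]^T$, and let $\sigma$ be the move function on $[B_1\mid A_2]^T$ given by $\sigma(x)=s_C(s_R(x))$ if $x$ lies in a row of $A_2$ and $\sigma(x)=s_C(s_R^{-1}(x))$ if $x$ lies in a row of $B_1$. Then $A_1$ and $B_1$ are $(\phi,\sigma)$-equivalent with respect to $A_2$.
   Context: Arrays are partially filled and toroidal; $F(X)$ is the set of filled cells. $s_R(i,j)=(i,j+t)$, $s_C(i,j)=(i+t,j)$ with $t\ge1$ minimal such that the cell is filled (computed in the whole stacked array). $[Y\mid X]^T$ denotes the array obtained by placing $Y$ above $X$. For $\phi$ on $[A_1\mid X]^T$ and $\sigma$ on $[B_1\mid X]^T$, $\phi_2(x)=\phi^t(x)$ with $t\ge1$ minimal such that $\phi^t(x)\in X$ (for $x\in F(X)$), similarly $\sigma_2$. $A_1,B_1$ are $(\phi,\sigma)$-equivalent with respect to $X$ if for every $x\in F(X)$: $\phi(x)\notin X\iff\sigma(x)\notin X$, and when both are outside $X$, $\phi_2(x)=\sigma_2(x)$. *)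

(* Defs.v *)
(* Conventions: rows/columns 0-based internally;
   paper row i (1-based) = internal row i-1. *)
From mathcomp Require Import all_boot.
Set Implicit Arguments. Unset Strict Implicit. Unset Printing Implicit Defensive.

(* A partially filled array: predicate of filled cells (row, column). *)
Definition arr := nat -> nat -> bool.
Definition cell := (nat * nat)%type.

(* [Y | X]^T : Y (with mY rows) placed above X. *)
Definition stack (Y : arr) (mY : nat) (X : arr) : arr :=
  fun i j => if i < mY then Y i j else X (i - mY) j.

Definition sR (F : arr) (n : nat) (x : cell) : cell :=
  let t := (find (fun k => F x.1 ((x.2 + k.+1) %% n)) (iota 0 n)).+1 in
  (x.1, (x.2 + t) %% n).
Definition sRinv (F : arr) (n : nat) (x : cell) : cell :=
  let t := (find (fun k => F x.1 ((x.2 + n - k.+1) %% n)) (iota 0 n)).+1 in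
  (x.1, (x.2 + n - t) %% n).
Definition sC (F : arr) (m : nat) (x : cell) : cell :=
  let t := (find (fun k => F ((x.1 + k.+1) %% m) x.2) (iota 0 m)).+1 in
  ((x.1 + t) %% m, x.2).

Definition bishop (F : arr) (m n : nat) (x : cell) : cell := sC F m (sR F n x).

Definition first_return (p : cell -> cell) (inP : cell -> bool) (x y : cell) : Prop :=
  exists t, 0 < t /\ iter t p x = y /\ inP y /\
    (forall s, 0 < s -> s < t -> ~~ inP (iter s p x)).

(* (phi,sigma)-equivalence of Y1 (mA rows) and Y2 (mB rows) w.r.t. X:
   phi acts on [Y1 | X]^T, sigma on [Y2 | X]^T; the filled cell (r,c) of X
   is the cell (mA + r, c) resp. (mB + r, c) of the stacked arrays. *)
Definition phisig_equiv (phi : cell -> cell) (mA : nat)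
    (sigma : cell -> cell) (mB : nat) (X : arr) : Prop :=
  forall r c, X r c ->
    let x1 := (mA + r, c) in let x2 := (mB + r, c) in
    ((phi x1).1 < mA <-> (sigma x2).1 < mB) /\
    ((phi x1).1 < mA -> (sigma x2).1 < mB ->
      exists r' c', X r' c' /\
        first_return phi (fun y => mA <= y.1) x1 (mA + r', c') /\
        first_return sigma (fun y => mB <= y.1) x2 (mB + r', c')).

Definition A1 (a b f : nat) : arr :=
  fun i j => [&& i < a, j < a + b & ~~ ((a - f <= i) && (j < a))].
Definition B1 (a b f : nat) : arr :=
  fun i j => [&& i < b + f, j < a + b & ~~ ((b <= i) && (a + f <= j))].
Definition J (d n : nat) : arr := fun i j => (i < d) && (j < n).

Definition phiA (a b f d : nat) : cell -> cell :=
  bishop (stack (A1 a b f) a (J d (a + b))) (a + d) (a + b).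

Definition sigmaB (a b f d : nat) (x : cell) : cell :=
  let F := stack (B1 a b f) (b + f) (J d (a + b)) in
  if b + f <= x.1 then sC F (b + f + d) (sR F (a + b) x)
  else sC F (b + f + d) (sRinv F (a + b) x).

(* Main.v *)
Require Import Defs.
From mathcomp Require Import all_boot.
From mathcomp Require Import zify.

Lemma find_iota_eq (P : pred nat) n k0 : k0 < n -> P k0 ->
  (forall k, k < k0 -> ~~ P k) -> find P (iota 0 n) = k0.
Proof.
move=> lt Pk H.
have -> : n = k0 + (n - k0) by lia.
rewrite iotaD find_cat.
have -> : has P (iota 0 k0) = false.
  apply/negbTE/hasPn => k; rewrite mem_iota => /andP[_ ]; rewrite add0n; exact: H.
rewrite size_iota add0n.
have -> : n - k0 = (n - k0 - 1).+1 by lia.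
by rewrite /= Pk addn0.
Qed.

Lemma sR_eq (F : arr) n i j k0 : k0 < n -> F i ((j + k0.+1) %% n) ->
  (forall k, k < k0 -> ~~ F i ((j + k.+1) %% n)) -> sR F n (i, j) = (i, (j + k0.+1) %% n).
Proof. by move=> lt Fk H; rewrite /sR /= (@find_iota_eq _ n k0). Qed.

Lemma sRinv_eq (F : arr) n i j k0 : k0 < n -> F i ((j + n - k0.+1) %% n) ->
  (forall k, k < k0 -> ~~ F i ((j + n - k.+1) %% n)) -> sRinv F n (i, j) = (i, (j + n - k0.+1) %% n).
Proof. by move=> lt Fk H; rewrite /sRinv /= (@find_iota_eq _ n k0). Qed.

Lemma sC_eq (F : arr) m i j k0 : k0 < m -> F ((i + k0.+1) %% m) j ->
  (forall k, k < k0 -> ~~ F ((i + k.+1) %% m) j) -> sC F m (i, j) = ((i + k0.+1) %% m, j).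
Proof. by move=> lt Fk H; rewrite /sC /= (@find_iota_eq _ m k0). Qed.

Lemma first_return_chain (p : cell -> cell) (inP : cell -> bool) k x y :
  (forall s, 0 < s <= k -> ~~ inP (iter s p x)) ->
  first_return p inP (iter k p x) y -> first_return p inP x y.
Proof.
move=> H [t [t0 [e [iy Hs]]]]; exists (t + k); split; first lia.
split; first by rewrite iterD.
split=> // s s0 st.
case: (leqP s k) => sk; first by apply: H; lia.
have -> : s = (s - k) + k by lia.
rewrite iterD; apply: Hs; lia.
Qed.

Lemma first_return_base (p : cell -> cell) (inP : cell -> bool) x : inP (p x) -> first_return p inP x (p x).
Proof. move=> h; exists 1; split=> //; split=> //; split=> // s; lia. Qed.

Lemma modn_sub x n : n <= x < n + n -> x %% n = x - n.
Proof. move=> h; have -> : x = (x - n) + n by lia. rewrite modnDr modn_small; lia. Qed.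

Lemma Fphi a b f d i j : stack (A1 a b f) a (J d (a+b)) i j =
  (i < a + d) && (j < a+b) && ~~((a-f <= i) && (i < a) && (j < a)).
Proof. rewrite /stack /A1 /J; case: ifP => h; lia. Qed.

Lemma FB a b f d i j : stack (B1 a b f) (b+f) (J d (a+b)) i j =
  (i < b+f+d) && (j < a+b) && ~~((b <= i) && (i < b+f) && (a+f <= j)).
Proof. rewrite /stack /B1 /J; case: ifP => h; lia. Qed.

Ltac gl := rewrite ?Fphi ?FB;
  repeat match goal with |- context[?x %% ?y] =>
  first [ rewrite (@modn_small x y); last lia
        | rewrite (@modn_sub x y); last lia ] end;
  repeat match goal with |- context[?x %% ?y] =>
          let H := fresh in let k := fresh "k" in
          (have H : x %% y < y by apply: ltn_pmod; lia);
          set k := x %% y in *; clearbody k end; lia.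

Ltac msimp := repeat match goal with |- context[?x %% ?y] =>
  lazymatch x with context[_ %% _] => fail | _ => idtac end;
  first [ rewrite (@modn_small x y); last lia
        | rewrite (@modn_sub x y); last lia
        | let H := fresh in case: (ltnP x y) => H;
          [rewrite (@modn_small x y H) | rewrite (@modn_sub x y); last lia] ] end.

Lemma first_return_base' (p : cell -> cell) (inP : cell -> bool) x y :
  p x = y -> inP y -> first_return p inP x y.
Proof. by move=> <-; apply: first_return_base. Qed.

Definition cfin a b f c := let K := (c + a + 1) %% (a + b) in
  if a + f <= K then K else if f <= K then K - f else K + a.

Section P.
Variables a b f d : nat.
Hypotheses (a0 : 0 < a) (b0 : 0 < b) (f0 : 0 < f) (d0 : 0 < d) (fa : f < a) (fb : f < b).

Lemma phi_full i j : (i.+1 < a - f) \/ (a <= i /\ i.+1 < a + d) ->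
  phiA a b f d (i, j) = (i.+1, (j + 1) %% (a + b)).
Proof.
move=> h; rewrite /phiA /bishop.
have n0 : 0 < a + b by lia.
rewrite (@sR_eq _ _ _ _ 0); [| lia | gl | by []].
rewrite (@sC_eq _ _ _ _ 0); [| lia | rewrite modn_small; gl | by []].
rewrite modn_small; [congr pair; lia | lia].
Qed.

Lemma phi_wrap j : phiA a b f d ((a + d).-1, j) = (0, (j + 1) %% (a + b)).
Proof.
have n0 : 0 < a + b by lia.
have e : (a + d).-1 + 1 = a + d by lia.
rewrite /phiA /bishop (@sR_eq _ _ _ _ 0); [| lia | gl | by []].
rewrite (@sC_eq _ _ _ _ 0); [| lia | rewrite e modnn; gl | by []].
by rewrite e modnn.
Qed.

Lemma phi_turn j : phiA a b f d ((a - f).-1, j) =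
  let k := (j + 1) %% (a + b) in if k < a then (a, k) else (a - f, k).
Proof.
have n0 : 0 < a + b by lia.
rewrite /phiA /bishop (@sR_eq _ _ _ _ 0); [| lia | gl | by []].
rewrite /=; case: ifP => ka.
- rewrite (@sC_eq _ _ _ _ f); first last.
  + move=> kk kkf; gl.
  + gl.
  + lia.
  rewrite modn_small; last lia. congr pair; lia.
- rewrite (@sC_eq _ _ _ _ 0); [| lia | gl | by []].
  rewrite modn_small; last lia. congr pair; lia.
Qed.

Lemma phi_part i y : a - f <= i < a -> y < b ->
  phiA a b f d (i, a + y) = (i.+1, a + (y + 1) %% b).
Proof.
move=> hi hy; have n0 : 0 < a + b by lia.
rewrite /phiA /bishop.
case: (ltnP (y + 1) b) => yb.
- rewrite (@sR_eq _ _ _ _ 0); [| lia | gl | by []].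
  rewrite modn_small; last lia.
  rewrite (@sC_eq _ _ _ _ 0); [| lia | gl | by []].
  rewrite modn_small; last lia. rewrite modn_small; last lia. congr pair; lia.
- have ey : y = b.-1 by lia.
  rewrite (@sR_eq _ _ _ _ a); first last.
  + move=> kk kka; gl.
  + gl.
  + lia.
  rewrite modn_sub; last lia.
  rewrite (@sC_eq _ _ _ _ 0); [| lia | gl | by []].
  have -> : y + 1 = b by lia.
  rewrite modnn modn_small; last lia. congr pair; lia.
Qed.


Lemma sig_X i j : b + f <= i -> i.+1 < b + f + d ->
  sigmaB a b f d (i, j) = (i.+1, (j + 1) %% (a + b)).
Proof.
move=> h1 h2; rewrite /sigmaB /= h1.
rewrite (@sR_eq _ _ _ _ 0); [| lia | gl | by []].
rewrite (@sC_eq _ _ _ _ 0); [| lia | gl | by []].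
congr pair; gl.
Qed.

Lemma sig_wrap j : sigmaB a b f d ((b + f + d).-1, j) = (0, (j + 1) %% (a + b)).
Proof.
have e : (b + f + d).-1 + 1 = b + f + d by lia.
rewrite /sigmaB /=; have -> : b + f <= (b + f + d).-1 by lia.
rewrite (@sR_eq _ _ _ _ 0); [| lia | gl | by []].
rewrite (@sC_eq _ _ _ _ 0); [| lia | rewrite e modnn; gl | by []].
by rewrite e modnn.
Qed.

Lemma sig_full i j : i.+1 < b -> sigmaB a b f d (i, j) = (i.+1, (j + (a + b) - 1) %% (a + b)).
Proof.
move=> h; rewrite /sigmaB /=; have -> : (b + f <= i) = false by lia.
rewrite (@sRinv_eq _ _ _ _ 0); [| lia | gl | by []].
rewrite (@sC_eq _ _ _ _ 0); [| lia | gl | by []].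
congr pair; gl.
Qed.

Lemma sig_turn j : sigmaB a b f d (b.-1, j) =
  let K := (j + (a + b) - 1) %% (a + b) in if a + f <= K then (b + f, K) else (b, K).
Proof.
rewrite /sigmaB /=; have -> : (b + f <= b.-1) = false by lia.
rewrite (@sRinv_eq _ _ _ _ 0); [| lia | gl | by []].
case: ifP => ka.
- rewrite (@sC_eq _ _ _ _ f); first last.
  + move=> kk kkf; gl.
  + gl.
  + lia.
  congr pair; gl.
- rewrite (@sC_eq _ _ _ _ 0); [| lia | gl | by []].
  congr pair; gl.
Qed.

Lemma sig_part i y : b <= i < b + f -> y < a + f ->
  sigmaB a b f d (i, y) = (i.+1, (y + (a + f) - 1) %% (a + f)).
Proof.
move=> hi hy; rewrite /sigmaB /=; have -> : (b + f <= i) = false by lia.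
case: (posnP y) => y0.
- subst y. rewrite (@sRinv_eq _ _ _ _ (b - f)); first last.
  + move=> kk kk1; gl.
  + gl.
  + lia.
  rewrite (@sC_eq _ _ _ _ 0); [| lia | gl | by []].
  congr pair; gl.
- rewrite (@sRinv_eq _ _ _ _ 0); [| lia | gl | by []].
  rewrite (@sC_eq _ _ _ _ 0); [| lia | gl | by []].
  congr pair; gl.
Qed.


Lemma phi_iter_full s j : j < a + b -> s < a - f ->
  iter s (phiA a b f d) (0, j) = (s, (j + s) %% (a + b)).
Proof.
move=> hj; elim: s => [|s IH] h /=; first by rewrite addn0 modn_small.
rewrite IH; last lia.
rewrite phi_full; last lia.
by rewrite modnDml -addnA addn1.
Qed.

Lemma phi_iter_part s y : y < b -> s <= f ->
  iter s (phiA a b f d) (a - f, a + y) = (a - f + s, a + (y + s) %% b).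
Proof.
move=> hy; elim: s => [|s IH] h /=; first by rewrite !addn0 modn_small.
rewrite IH; last lia.
rewrite phi_part; [|lia|apply: ltn_pmod; lia].
congr pair; [lia | by rewrite modnDml -addnA addn1].
Qed.

Lemma sig_iter_full s j : j < a + b -> s < b ->
  iter s (sigmaB a b f d) (0, j) = (s, (j + (a + b) - s) %% (a + b)).
Proof.
move=> hj; elim: s => [|s IH] h /=; first by rewrite subn0 modnDr modn_small.
rewrite IH; last lia.
rewrite sig_full; last lia.
have -> : (j + (a + b) - s) %% (a + b) + (a + b) - 1 = (j + (a + b) - s) %% (a + b) + (a + b - 1) by lia.
rewrite modnDml.
have -> : j + (a + b) - s + (a + b - 1) = (j + (a + b) - s.+1) + (a + b) by lia.
by rewrite modnDr.
Qed.

Lemma sig_iter_part s y : y < a + f -> s <= f ->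
  iter s (sigmaB a b f d) (b, y) = (b + s, (y + (a + f) - s) %% (a + f)).
Proof.
move=> hy; elim: s => [|s IH] h /=; first by rewrite addn0 subn0 modnDr modn_small.
rewrite IH; last lia.
rewrite sig_part; [|lia|apply: ltn_pmod; lia].
have -> : (y + (a + f) - s) %% (a + f) + (a + f) - 1 = (y + (a + f) - s) %% (a + f) + (a + f - 1) by lia.
rewrite modnDml.
have -> : y + (a + f) - s + (a + f - 1) = (y + (a + f) - s.+1) + (a + f) by lia.
congr pair; [lia | by rewrite modnDr].
Qed.


Lemma phi_tail y : y < b ->
  first_return (phiA a b f d) (fun z => a <= z.1) (a - f, a + y) (a + 0, a + (y + f) %% b).
Proof.
move=> hy; exists f; split=> //; split.
  by rewrite phi_iter_part //; congr pair; lia.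
split; first by rewrite /=; lia.
by move=> s s0 sf; rewrite phi_iter_part /=; lia.
Qed.

Lemma phi_from_turn j : j < a + b ->
  first_return (phiA a b f d) (fun z => a <= z.1) ((a - f).-1, j)
   (a + 0, if (j + 1) %% (a + b) < a then (j + 1) %% (a + b)
           else a + ((j + 1) %% (a + b) - a + f) %% b).
Proof.
move=> hj; have kn : (j + 1) %% (a + b) < a + b by apply: ltn_pmod; lia.
case: ifP => ka.
  by apply: first_return_base'; [rewrite phi_turn /= ka; congr pair; lia | rewrite /=; lia].
apply: (@first_return_chain _ _ 1).
  move=> s hs; have -> : s = 1 by lia.
  change (~~ (a <= (phiA a b f d ((a - f).-1, j)).1)).
  by rewrite phi_turn /= ka /=; lia.
change (first_return (phiA a b f d) (fun z => a <= z.1) (phiA a b f d ((a - f).-1, j))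
  (a + 0, a + ((j + 1) %% (a + b) - a + f) %% b)).
rewrite phi_turn /= ka.
move: kn ka; move: ((j + 1) %% (a + b)) => k kn ka.
have -> : k = a + (k - a) by lia.
rewrite (_ : a + (k - a) - a = k - a); last lia.
apply: phi_tail; lia.
Qed.

Lemma phi_FR c : c < a + b ->
  first_return (phiA a b f d) (fun y => a <= y.1) ((a + d).-1, c) (a + 0, cfin a b f c).
Proof.
move=> hc.
have It : forall s, s < a - f -> iter s.+1 (phiA a b f d) ((a + d).-1, c) =
   (s, ((c + 1) %% (a + b) + s) %% (a + b)).
  move=> s hs; rewrite iterSr phi_wrap phi_iter_full //; apply: ltn_pmod; lia.
apply: (@first_return_chain _ _ (a - f)).
  move=> s /andP[s0 sk]; have -> : s = s.-1.+1 by lia.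
  rewrite It /=; lia.
have -> : a - f = (a - f).-1.+1 by lia.
rewrite It; last lia.
set col := _ %% (a + b).
have colN : col < a + b by apply: ltn_pmod; lia.
suff -> : cfin a b f c = (if (col + 1) %% (a + b) < a then (col + 1) %% (a + b)
           else a + ((col + 1) %% (a + b) - a + f) %% b) by apply: phi_from_turn.
rewrite /col /cfin !modnDml; clear It colN; clear col.
have [c1|c1] := ltnP c.+1 f; last have [c2|c2] := ltnP c.+1 b; last have [c3|c3] := ltnP c.+1 (b + f); last have [c4|c4] := ltnP c.+1 (a + b).
all: msimp; repeat (case: ifP => ?); lia.
Qed.


Lemma sig_tail y : y < a + f ->
  first_return (sigmaB a b f d) (fun z => b + f <= z.1) (b, y) (b + f + 0, (y + (a + f) - f) %% (a + f)).
Proof.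
move=> hy; exists f; split=> //; split.
  by rewrite sig_iter_part //; congr pair; lia.
split; first by rewrite /=; lia.
by move=> s s0 sf; rewrite sig_iter_part /=; lia.
Qed.

Lemma sig_from_turn j : j < a + b ->
  first_return (sigmaB a b f d) (fun z => b + f <= z.1) (b.-1, j)
   (b + f + 0, if a + f <= (j + (a + b) - 1) %% (a + b) then (j + (a + b) - 1) %% (a + b)
           else ((j + (a + b) - 1) %% (a + b) + (a + f) - f) %% (a + f)).
Proof.
move=> hj; have kn : (j + (a + b) - 1) %% (a + b) < a + b by apply: ltn_pmod; lia.
case: ifP => ka.
  by apply: first_return_base'; [rewrite sig_turn /= ka; congr pair; lia | rewrite /=; lia].
apply: (@first_return_chain _ _ 1).
  move=> s hs; have -> : s = 1 by lia.
  change (~~ (b + f <= (sigmaB a b f d (b.-1, j)).1)).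
  by rewrite sig_turn /= ka /=; lia.
change (first_return (sigmaB a b f d) (fun z => b + f <= z.1) (sigmaB a b f d (b.-1, j))
  (b + f + 0, ((j + (a + b) - 1) %% (a + b) + (a + f) - f) %% (a + f))).
rewrite sig_turn /= ka.
apply: sig_tail; lia.
Qed.

Lemma sig_FR c : c < a + b ->
  first_return (sigmaB a b f d) (fun y => b + f <= y.1) ((b + f + d).-1, c) (b + f + 0, cfin a b f c).
Proof.
move=> hc.
have It : forall s, s < b -> iter s.+1 (sigmaB a b f d) ((b + f + d).-1, c) =
   (s, ((c + 1) %% (a + b) + (a + b) - s) %% (a + b)).
  move=> s hs; rewrite iterSr sig_wrap sig_iter_full //; apply: ltn_pmod; lia.
apply: (@first_return_chain _ _ b).
  move=> s /andP[s0 sk]; have -> : s = s.-1.+1 by lia.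
  rewrite It /=; lia.
have := It b.-1; rewrite prednK // => ->; last lia.
set col := _ %% (a + b).
have colN : col < a + b by apply: ltn_pmod; lia.
suff -> : cfin a b f c = (if a + f <= (col + (a + b) - 1) %% (a + b) then (col + (a + b) - 1) %% (a + b)
           else ((col + (a + b) - 1) %% (a + b) + (a + f) - f) %% (a + f)) by apply: sig_from_turn.
rewrite /col /cfin; clear It colN; clear col.
have [c1|c1] := ltnP c.+1 f; last have [c2|c2] := ltnP c.+1 b; last have [c3|c3] := ltnP c.+1 (b + f); last have [c4|c4] := ltnP c.+1 (a + b).
all: msimp; repeat (case: ifP => ?); msimp; lia.
Qed.
End P.

Theorem lemma4p4 (a b f d : nat) :
  0 < a -> 0 < b -> 0 < f -> 0 < d -> f < minn a b ->
  phisig_equiv (phiA a b f d) a (sigmaB a b f d) (b + f) (J d (a + b)).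
Proof.
move=> a0 b0 f0 d0 hf r c /andP[rd cn].
have fa : f < a by lia.
have fb : f < b by lia.
have cfN : cfin a b f c < a + b.
  rewrite /cfin; have : (c + a + 1) %% (a + b) < a + b by apply: ltn_pmod; lia.
  move: ((c + a + 1) %% (a + b)) => K hK; repeat (case: ifP => ?); lia.
cbv zeta.
case: (ltnP r.+1 d) => hr.
- rewrite phi_full; try by [lia | right; lia].
  rewrite sig_X; try lia.
  split; first by split => /=; lia.
  by move=> /= h; lia.
- have er : a + r = (a + d).-1 by lia.
  have es : b + f + r = (b + f + d).-1 by lia.
  rewrite er es phi_wrap; try lia.
  rewrite sig_wrap; try lia.
  split; first by split => /=; lia.
  move=> _ _; exists 0, (cfin a b f c); split; first by rewrite /J; lia.
  split; [apply: phi_FR | apply: sig_FR]; lia.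
Qed.
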